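(* For all integers $1\le j\le k$, writing $[m]=\{0,1,\ldots,m\}$, we have $(j+1)\,d([k-j])\le 2\,d([k-1])$. Equality holds if and only if $j=1$, or $k=3$ and $j=2$.
   Context: For $A,B\subseteq\mathbb{N}=\{0,1,\ldots\}$, $A+B=\{a+b:a\in A,b\in B\}$. For a nonempty finite $C\subseteq\mathbb{N}$, $d(C)$ is the number of sets $B\subseteq\mathbb{N}$ such that $B+D=C$ for some $D\subseteq\mathbb{N}$. *)

(* Defs.v *)
From mathcomp Require Import all_boot.
From mathcomp Require Import boolp classical_sets cardinality.
Set Implicit Arguments. Unset Strict Implicit. Unset Printing Implicit Defensive.
Local Open Scope classical_set_scope.

Definition sumset (A B : set nat) : set nat :=
  [set c | exists a b, A a /\ B b /\ c = (a + b)%N].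

Definition interval0 (m : nat) : set nat := [set n | (n <= m)%N].

Definition dset (C : set nat) : set (set nat) :=
  [set B | exists D : set nat, sumset B D = C].

Definition d_eq (C : set nat) (n : nat) : Prop := (dset C #= `I_n)%card.

(* Main.v *)
Require Import Defs.
From mathcomp Require Import all_boot.
From mathcomp Require Import boolp classical_sets cardinality.
From mathcomp Require Import zify.
Set Implicit Arguments. Unset Strict Implicit. Unset Printing Implicit Defensive.

Definition mx (s : seq nat) := foldr maxn 0 s.
Definition pos (s : seq nat) := all (fun x => 0 < x) s.
Definition W s := sumn s + mx s.
Definition good n s := pos s && (W s <= n.+1).
Definition tight n s := pos s && (W s == n.+1).

Fixpoint lists (L M : nat) : seq (seq nat) :=
  if L is L'.+1 then [::] :: [seq x :: s | x <- iota 1 M, s <- lists L' M]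
  else [:: [::]].

Lemma mem_lists L M (s : seq nat) :
  (s \in lists L M) = (size s <= L) && all (fun x => 0 < x <= M) s.
Proof.
elim: L s => [|L IH] [|x s] //=.
rewrite in_cons /=; apply/allpairsP/idP.
  case=> [[y t]] /= [Hy Ht [-> ->]]; rewrite mem_iota in Hy; case/andP: Hy => Hy1 Hy2.
  rewrite IH in Ht; case/andP: Ht => H1 ->; rewrite andbT.
  by rewrite ltnS H1 Hy1 -ltnS -add1n.
move=> /andP[Hs /andP[Hx Ha]]; exists (x, s) => /=; split=> //.
  rewrite mem_iota; lia.
by rewrite IH Ha andbT -ltnS.
Qed.

Lemma uniq_lists L M : uniq (lists L M).
Proof.
elim: L => [|L IH] //=; apply/andP; split.
  by apply/allpairsP => -[[y t]] /= [].
apply: allpairs_uniq => //; first exact: iota_uniq.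
by move=> [a b] [c d] _ _ /= [-> ->].
Qed.

Lemma pos_size s : pos s -> size s <= sumn s.
Proof. elim: s => //= x s IH /andP[Hx Hs]; have := IH Hs; lia. Qed.

Lemma mem_sumn (s : seq nat) x : x \in s -> x <= sumn s.
Proof. elim: s => //= y s IH; rewrite in_cons => /orP[/eqP->|/IH]; lia. Qed.

Lemma mx_ge (s : seq nat) x : x \in s -> x <= mx s.
Proof. elim: s => //= y s IH; rewrite in_cons => /orP[/eqP->|/IH]; lia. Qed.

Lemma mx_le s B : (forall x, x \in s -> x <= B) -> mx s <= B.
Proof.
elim: s => //= y s IH H; rewrite geq_max H ?mem_head // IH // => x Hx.
by apply: H; rewrite in_cons Hx orbT.
Qed.

Lemma mx_rcons s x : mx (rcons s x) = maxn (mx s) x.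
Proof. elim: s => //= [|y s ->]; lia. Qed.

Lemma pos_rcons s x : pos (rcons s x) = pos s && (0 < x).
Proof. by rewrite /pos all_rcons andbC. Qed.

Lemma mx_nseq k : mx (nseq k 1) <= 1.
Proof. elim: k => //= k IH; lia. Qed.

Lemma pos_mx s : pos s -> s != [::] -> 0 < mx s.
Proof. case: s => //= x s /andP[Hx _] _; rewrite /mx /=; lia. Qed.

Definition U n := lists n.+1 n.+1.
Definition Gd n := filter (good n) (U n).
Definition Tn n := filter (tight n) (U n).
Definition dd n := size (Gd n).

Lemma good_U n (s : seq nat) : good n s -> s \in U n.
Proof.
move=> /andP[Hp HW]; rewrite mem_lists; apply/andP; split.
  have := pos_size Hp; rewrite /W in HW; lia.
apply/allP => x Hx; have H1 := allP Hp x Hx; have H2 := mem_sumn Hx.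
rewrite /W in HW; simpl in H1; apply/andP; split; lia.
Qed.

Lemma mem_Gd n (s : seq nat) : (s \in Gd n) = good n s.
Proof. rewrite mem_filter; case H: (good n s) => //; exact: good_U. Qed.

Lemma tight_good n (s : seq nat) : tight n s -> good n s.
Proof. rewrite /tight /good => /andP[H1 /eqP H2]; by rewrite H1 H2 leqnn. Qed.

Lemma mem_Tn n (s : seq nat) : (s \in Tn n) = tight n s.
Proof.
rewrite mem_filter; case H: (tight n s) => //; exact/good_U/tight_good.
Qed.

Lemma uniq_Gd n : uniq (Gd n). Proof. exact/filter_uniq/uniq_lists. Qed.
Lemma uniq_Tn n : uniq (Tn n). Proof. exact/filter_uniq/uniq_lists. Qed.

Lemma size_uniq_eq (T : eqType) (a b : seq T) :
  uniq a -> uniq b -> a =i b -> size a = size b.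
Proof. by move=> ua ub e; apply/perm_size/uniq_perm. Qed.

Lemma dd_succ n : dd n.+1 = dd n + size (Tn n.+1).
Proof.
rewrite /dd /Gd /Tn !size_filter.
have E : count (good n.+1) (U n.+1) =
         count (predU (good n) (tight n.+1)) (U n.+1).
  apply: eq_count => s /=; rewrite /good /tight.
  case: (pos s) => //=; lia.
have E2 : count (predI (good n) (tight n.+1)) (U n.+1) = 0.
  apply/eqP; rewrite -leqn0 leqNgt -has_count; apply/hasP => -[s _] /=.
  rewrite /good /tight; case: (pos s) => //=; lia.
have := count_predUI (good n) (tight n.+1) (U n.+1).
rewrite -E E2 addn0 => ->; congr (_ + _).
rewrite -!size_filter; apply: size_uniq_eq; try exact/filter_uniq/uniq_lists.
move=> s; rewrite !mem_filter; case H: (good n s) => //=.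
have H' : good n.+1 s by move: H; rewrite /good; case: (pos s) => //=; lia.
by rewrite (good_U H) (good_U H').
Qed.

Lemma inj_le (A B : seq (seq nat)) f :
  uniq A -> {in A &, injective f} -> (forall x, x \in A -> f x \in B) ->
  size A <= size B.
Proof.
move=> uA inj sub; rewrite -(size_map f); apply: uniq_leq_size.
  by rewrite map_inj_in_uniq.
by move=> y /mapP[x Hx ->]; apply: sub.
Qed.

Lemma inj_lt (A B : seq (seq nat)) f t0 :
  uniq A -> {in A &, injective f} -> (forall x, x \in A -> f x \in B) ->
  t0 \in B -> (forall x, x \in A -> f x != t0) ->
  size A < size B.
Proof.
move=> uA inj sub tB tn; rewrite -(size_map f) -/(size (t0 :: _)).
apply: uniq_leq_size.
  rewrite /= map_inj_in_uniq // uA andbT; apply/mapP => -[x Hx /esym /eqP].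
  by rewrite (negbTE (tn x Hx)).
move=> y; rewrite in_cons => /orP[/eqP->//|/mapP[x Hx ->]]; exact: sub.
Qed.
Definition rr n (s : seq nat) := n.+2 - W s.
Definition A1 n (s : seq nat) := (s != [::]) && (rr n s <= mx s).
Definition phi1 n (s : seq nat) := rcons s (rr n s).
Definition qq n (s : seq nat) := (rr n s + mx s)./2.
Definition phi2 n (s : seq nat) :=
  if odd (rr n s + mx s) then rcons (rcons s (qq n s)) 1 else rcons s (qq n s).

Lemma sumn_nseq1 k : sumn (nseq k 1) = k.
Proof. elim: k => //= k ->; lia. Qed.

Lemma pos_nseq1 k : pos (nseq k 1).
Proof. by elim: k. Qed.

Lemma dd_split n :
  dd n = size (filter (A1 n) (Gd n)) + size (filter (predC (A1 n)) (Gd n)).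
Proof. by rewrite !size_filter count_predC. Qed.

Lemma part1 n : size (filter (A1 n) (Gd n)) <= size (Tn n.+1) /\
  (2 <= n -> size (filter (A1 n) (Gd n)) < size (Tn n.+1)).
Proof.
have uA : uniq (filter (A1 n) (Gd n)) by apply/filter_uniq/uniq_Gd.
have inj : {in filter (A1 n) (Gd n) &, injective (phi1 n)}.
  by move=> x y _ _ /rcons_inj [].
have sub : forall x, x \in filter (A1 n) (Gd n) -> phi1 n x \in Tn n.+1.
  move=> x; rewrite mem_filter mem_Gd mem_Tn => /andP[/andP[_ Hr] /andP[Hp HW]].
  rewrite /tight /phi1 pos_rcons Hp /W sumn_rcons mx_rcons /=.
  move: Hr HW; rewrite /rr /W => Hr HW.
  apply/andP; split; first lia.
  apply/eqP; lia.
split; first exact: inj_le uA inj sub.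
move=> n2; apply: (inj_lt (t0 := rcons (nseq (n-2) 1) 2)) uA inj sub _ _.
  rewrite mem_Tn /tight pos_rcons pos_nseq1 /W sumn_rcons mx_rcons sumn_nseq1 /=.
  have := mx_nseq (n-2); move=> H; apply/eqP; lia.
move=> x; rewrite mem_filter => /andP[/andP[_ Hr] _]; apply/eqP.
rewrite /phi1 => /rcons_inj [Ex Er]; move: Hr; rewrite Er Ex.
have := mx_nseq (n-2); lia.
Qed.

Lemma phi2_spec n x : x \in Gd n -> ~~ A1 n x ->
  tight n.+1 (phi2 n x) /\
  ((phi2 n x = rcons x (qq n x) /\ mx x < qq n x) \/
   (phi2 n x = rcons (rcons x (qq n x)) 1 /\ 0 < qq n x)).
Proof.
rewrite mem_Gd /A1 => /andP[Hp HW] HA.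
have Hlt : mx x < rr n x /\ 2 <= rr n x + mx x.
  case: (altP (x =P [::])) HA => [-> _|Hne] /=.
    by rewrite /rr /W /=; lia.
  move=> Hr; have := pos_mx Hp Hne; move: HW; rewrite /rr /W in Hr *; lia.
have Hd := odd_double_half (rr n x + mx x).
rewrite /phi2 /qq; move: Hlt Hd HW.
rewrite /tight /rr /W.
case: (odd _) => /= [[H1 H2] Hd HW|[H1 H2] Hd HW].
  rewrite !pos_rcons Hp /= !sumn_rcons !mx_rcons.
  rewrite -muln2 in Hd.
  split; first (apply/andP; split; [lia|apply/eqP; lia]).
  right; split => //; lia.
rewrite !pos_rcons Hp /= !sumn_rcons !mx_rcons.
rewrite -muln2 in Hd.
split; first (apply/andP; split; [lia|apply/eqP; lia]).
left; split => //; lia.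
Qed.

Lemma part2 n : size (filter (predC (A1 n)) (Gd n)) <= size (Tn n.+1).
Proof.
have uA : uniq (filter (predC (A1 n)) (Gd n)) by apply/filter_uniq/uniq_Gd.
apply: (inj_le (f := phi2 n)) uA _ _.
  move=> x y; rewrite !(mem_filter (predC (A1 n))) => /andP[Hx Gx] /andP[Hy Gy].
  have [_ [[Ex Qx]|[Ex Qx]]] := phi2_spec Gx Hx;
  have [_ [[Ey Qy]|[Ey Qy]]] := phi2_spec Gy Hy; rewrite Ex Ey.
  - by case/rcons_inj.
  - case/rcons_inj => E1 E2; move: Qx; rewrite E2 E1 mx_rcons; lia.
  - case/rcons_inj => E1 E2; move: Qy; rewrite -E2 -E1 mx_rcons; lia.
  - by case/rcons_inj => /rcons_inj [].
move=> x; rewrite (mem_filter (predC (A1 n))) => /andP[Hx Gx]; rewrite mem_Tn.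
by have [-> _] := phi2_spec Gx Hx.
Qed.

Lemma dd_pos n : 0 < dd n.
Proof.
have H : [::] \in Gd n by rewrite mem_Gd.
by rewrite /dd; case: (Gd n) H.
Qed.

Lemma key n : 3 * dd n <= 2 * dd n.+1 /\ (3 * dd n == 2 * dd n.+1) = (n == 1).
Proof.
case: n => [|[|n]]; first by vm_compute.
  by vm_compute.
have [H1 H1'] := part1 n.+2; have H2 := part2 n.+2.
have E1 := dd_succ n.+2; have E2 := dd_split n.+2; have H3 := H1' isT.
split; first lia.
apply/negbTE/eqP; lia.
Qed.
Local Open Scope classical_set_scope.

Fixpoint psf (a : nat) (s : seq nat) : seq nat :=
  if s is x :: s' then a :: psf (a + x) s' else [:: a].
Definition enc (s : seq nat) : set nat := [set x | x \in psf 0 s].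

Lemma psf_ge a (s : seq nat) y : y \in psf a s -> a <= y.
Proof.
elim: s a => [|x s IH] a /=; rewrite in_cons => /orP[/eqP->//|].
  by rewrite in_nil.
move/IH; lia.
Qed.

Lemma psf_le a (s : seq nat) y : y \in psf a s -> y <= a + sumn s.
Proof.
elim: s a => [|x s IH] a /=; rewrite in_cons => /orP[/eqP->|]; try lia.
  by rewrite in_nil.
move/IH; lia.
Qed.

Lemma psf_head a (s : seq nat) : a \in psf a s.
Proof. by case: s => [|x s]; rewrite /= in_cons eqxx. Qed.

Lemma psf_last a (s : seq nat) : a + sumn s \in psf a s.
Proof.
elim: s a => [|x s IH] a /=; first by rewrite addn0 in_cons eqxx.
by rewrite in_cons addnA IH orbT.
Qed.

Lemma psf_hd a (s : seq nat) : head 0 (psf a s) = a.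
Proof. by case: s. Qed.

Lemma psf_sorted a (s : seq nat) : pos s -> sorted ltn (psf a s).
Proof.
elim: s a => [|x s IH] a //= /andP[Hx Hs].
rewrite (path_sortedE ltn_trans) IH // andbT.
apply/allP => y /psf_ge; lia.
Qed.

Lemma psf_inj a (s s' : seq nat) : psf a s = psf a s' -> s = s'.
Proof.
elim: s a s' => [|x s IH] a [|x' s'] //=.
- by case: s'.
- by case: s IH.
case=> E; have := congr1 (head 0) E; rewrite !psf_hd => Ex.
have Exx : x = x' by lia.
by rewrite Exx in E *; rewrite (IH _ _ E).
Qed.

Lemma enc_inj (s s' : seq nat) : pos s -> pos s' -> enc s = enc s' -> s = s'.
Proof.
move=> Hs Hs' H; apply: (@psf_inj 0).
apply: (irr_sorted_eq ltn_trans ltnn (psf_sorted 0 Hs) (psf_sorted 0 Hs')).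
move=> y; apply/idP/idP => Hy.
  by have : enc s' y by rewrite -H.
by have : enc s y by rewrite H.
Qed.

Lemma cover a (s : seq nat) c : a <= c ->
  exists y, [/\ y \in psf a s, y <= c & (c - y < mx s \/ y = a + sumn s)].
Proof.
elim: s a => [|x s IH] a Hc /=.
  by exists a; rewrite in_cons eqxx; split => //; right; lia.
case: (ltnP c (a + x)) => Hcx.
  exists a; rewrite in_cons eqxx; split => //; left; rewrite /mx /=; lia.
have [y [Hy1 Hy2 Hy3]] := IH (a + x) Hcx.
exists y; rewrite in_cons Hy1 orbT; split => //.
case: Hy3 => [H|->]; [left; rewrite /mx /= -/(mx s); lia|right; lia].
Qed.

Lemma good_sum n (s : seq nat) : good n s -> sumn s <= n.
Proof.
case: s => [|x s] //= /andP[/andP[Hx _]]; rewrite /W /mx /=; lia.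
Qed.

Lemma E2 n (s : seq nat) : good n s ->
  sumset (enc s) (interval0 (n - sumn s)) = interval0 n.
Proof.
move=> Hg; have Hsn := good_sum Hg; move: (Hg) => /andP[Hp HW].
apply/seteqP; split => c /=.
  move=> [y [d [Hy [Hd ->]]]]; move: Hy Hd; rewrite /enc /interval0 /=.
  move=> /psf_le; lia.
rewrite /interval0 /= => Hc.
have [y [Hy1 Hy2 Hy3]] := cover s (leq0n c).
exists y, (c - y); split => //; split; last lia.
change (c - y <= n - sumn s); rewrite /W in HW; case: Hy3 => [H|H]; lia.
Qed.

Lemma gap a (s : seq nat) K : pos s ->
  (forall c, a <= c -> c < a + sumn s ->
     exists y, [/\ y \in psf a s, y <= c & c <= y + K]) ->
  forall x, x \in s -> x <= K.+1.
Proof.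
elim: s a => [|x s IH] a //= /andP[Hx Hs] H z.
rewrite in_cons => /orP[/eqP->|Hz].
  have [y [Hy1 Hy2 Hy3]] := H (a + x - 1) ltac:(lia) ltac:(lia); move: Hy1; rewrite in_cons => /orP[/eqP Ey|].
    lia.
  move/psf_ge; lia.
apply: (IH (a + x)) => // c Hc1 Hc2.
have [y [Hy1 Hy2 Hy3]] := H c ltac:(lia) ltac:(lia); move: Hy1; rewrite in_cons => /orP[/eqP Ey|Hy].
  exists (a + x); split; [exact: psf_head|lia|lia].
by exists y.
Qed.

Lemma build M a (B : set nat) : B a -> (forall x, B x -> a <= x <= a + M) ->
  exists s, pos s /\ [set x | x \in psf a s] = B.
Proof.
elim: M a B => [|M IH] a B Ba HB.
  exists [::]; split => //; apply/seteqP; split => x /=.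
    by rewrite in_cons in_nil orbF => /eqP ->.
  move=> Bx; case/andP: (HB x Bx) => H1 H2.
  rewrite in_cons in_nil orbF; apply/eqP; lia.
case: (pselect (exists x, B x /\ a < x)) => [exP|nex].
  have exP' : exists x, `[< B x /\ a < x >].
    by case: exP => x Hx; exists x; apply/asboolP.
  case: (ex_minnP exP') => a' /asboolP [Ba' Ha'] Hmin.
  have HB' : forall x, [set x | B x /\ a < x] x -> a' <= x <= a' + M.
    move=> x [Bx Hax]; case/andP: (HB x Bx) => H1 H2.
    have H3 := Hmin x (asboolT (conj Bx Hax)).
    apply/andP; split; lia.
  have [s' [Hs' Es']] := IH a' [set x | B x /\ a < x] (conj Ba' Ha') HB'.
  exists ((a' - a) :: s'); split.
    by rewrite /pos /= -/(pos s') Hs' andbT; apply/ltP; lia.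
  have -> : psf a ((a' - a) :: s') = a :: psf a' s'.
    by rewrite /= (_ : a + (a' - a) = a') //; lia.
  apply/seteqP; split => x /=; rewrite in_cons.
    move=> /orP[/eqP ->//|Hx].
    by have : [set x | x \in psf a' s'] x by []; rewrite Es' => -[].
  move=> Bx; case: (ltnP a x) => Hax.
    by apply/orP; right; have : [set x | B x /\ a < x] x by []; rewrite -Es'.
  case/andP: (HB x Bx) => H1 H2.
  by apply/orP; left; apply/eqP; lia.
exists [::]; split => //; apply/seteqP; split => x /=.
  by rewrite in_cons in_nil orbF => /eqP ->.
move=> Bx; rewrite in_cons in_nil orbF; case: (ltnP a x) => Hax.
  by exfalso; apply: nex; exists x.
case/andP: (HB x Bx) => H1 H2; apply/eqP; lia.
Qed.

Lemma E3 n (B D : set nat) : sumset B D = interval0 n ->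
  exists s, good n s /\ enc s = B.
Proof.
move=> H.
have H0 : sumset B D 0 by rewrite H.
case: H0 => a0 [b0 [Ba0 [Db0 E0]]].
have a00 : a0 = 0 by lia.
have b00 : b0 = 0 by lia.
subst a0 b0.
have Hle : forall x d, B x -> D d -> x + d <= n.
  move=> x d Bx Dd; have : sumset B D (x + d) by exists x, d.
  by rewrite H.
have HB : forall x, B x -> 0 <= x <= 0 + n.
  move=> x Bx; have := Hle x 0 Bx Db0; rewrite addn0 => ->; by [].
have [s [Hp Es]] := build Ba0 HB.
have Bb : B (sumn s).
  have P : [set x | x \in psf 0 s] (0 + sumn s) by exact: psf_last.
  by rewrite Es add0n in P.
have Hbn := Hle _ _ Bb Db0; rewrite addn0 in Hbn.
have Hgap := @gap 0 s (n - sumn s) Hp.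
have Hmx : mx s <= (n - sumn s).+1.
  apply: mx_le; apply: Hgap => c _ Hc.
  have : interval0 n c by rewrite /interval0 /=; lia.
  rewrite -H => -[y [d [By [Dd Ec]]]].
  exists y; split.
  - by have : [set x | x \in psf 0 s] y by rewrite Es.
  - lia.
  - have := Hle _ _ Bb Dd; lia.
exists s; split => //.
by rewrite /good Hp /W; apply/leP; lia.
Qed.

Lemma dset_eq n : dset (interval0 n) = enc @` [set s | s \in Gd n].
Proof.
apply/seteqP; split => B /=.
  case=> D HD; have [s [Hs Es]] := E3 HD.
  by exists s => //=; rewrite mem_Gd.
case=> s Hs <-; exists (interval0 (n - sumn s)); apply: E2.
by rewrite -mem_Gd.
Qed.

Lemma card_dd n : d_eq (interval0 n) (dd n).
Proof.
rewrite /d_eq dset_eq.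
have h1 : (enc @` [set s | s \in Gd n] #= [set s | s \in Gd n])%card.
  apply: inj_card_eq => x y /set_mem Hx /set_mem Hy.
  move: Hx Hy; rewrite /= !mem_Gd => /andP[Hx _] /andP[Hy _].
  exact: enc_inj.
have h2 : [set s | s \in Gd n] = (nth [::] (Gd n)) @` `I_(dd n).
  apply/seteqP; split => s /=.
    move=> Hs; exists (index s (Gd n)); first by change (index s (Gd n) < size (Gd n)); rewrite index_mem.
    exact: nth_index.
  by case=> i Hi <-; apply: mem_nth.
have h3 : ((nth [::] (Gd n)) @` `I_(dd n) #= `I_(dd n))%card.
  apply: inj_card_eq => x y /set_mem Hx /set_mem Hy.
  by move/eqP; rewrite (nth_uniq _ Hx Hy (uniq_Gd n)) => /eqP.
apply: (card_eq_trans h1); rewrite h2; exact: h3.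
Qed.

Lemma chain m i : (i + 3) * dd m <= 2 * dd (m + i + 1) /\
  (0 < i -> (i + 3) * dd m < 2 * dd (m + i + 1)).
Proof.
elim: i => [|i [IH1 IH2]].
  have [K1 _] := key m; rewrite addn0 addn1; split => //.
have [K1 _] := key (m + i + 1).
have P := dd_pos m.
rewrite (_ : m + i.+1 + 1 = (m + i + 1).+1); last lia.
split; nia.
Qed.

Theorem mainTheorem8 (j k : nat) (hj : (1 <= j)%N) (hjk : (j <= k)%N) :
  exists a b : nat,
    d_eq (interval0 (k - j)) a /\ d_eq (interval0 (k - 1)) b /\
    ((j + 1) * a <= 2 * b)%N /\
    ((j + 1) * a = 2 * b <-> j = 1 \/ (k = 3 /\ j = 2)).
Proof.
exists (dd (k - j)), (dd (k - 1)); split; first exact: card_dd.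
split; first exact: card_dd.
case: j hj hjk => [//|[|[|j]]] _ hjk.
- split; first lia.
  by split => _; [left|lia].
- have [K1 K2] := key (k - 2).
  have E : k - 1 = (k - 2).+1 by lia.
  rewrite E; split; first lia.
  split.
    move=> Heq; right.
    have : (3 * dd (k - 2) == 2 * dd (k - 2).+1) by apply/eqP; lia.
    by rewrite K2 => /eqP; lia.
  case => [//|[Hk _]].
  have : (3 * dd (k - 2) == 2 * dd (k - 2).+1) by rewrite K2 Hk.
  move/eqP; lia.
- have [C1 C2] := chain (k - j.+3) j.+1.
  rewrite (_ : k - j.+3 + j.+1 + 1 = k - 1) in C1 C2; last lia.
  have C := C2 isT.
  split; first lia.
  split; first lia.
  case => [//|[_ //]].
Qed.
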